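(* We have $\psi_{FV}=\psi_{YZL}\circ\Psi$ as maps from $\mathfrak{S}_{n+1}$ to $\mathcal{LH}_n$.
   Context: A 2-Motzkin path of length $n$ is a word $\mathbf{s}=s_1\ldots s_n$ on the alphabet $\{\textsc{U},\textsc{D},\textsc{L}_r,\textsc{L}_b\}$ with as many letters $\textsc{U}$ as $\textsc{D}$ and heights $h_i(\mathbf{s})=|s_1\ldots s_i|_{\textsc{U}}-|s_1\ldots s_i|_{\textsc{D}}\ge 0$ for $i=1,\ldots,n$, $h_0(\mathbf{s})=0$. A Laguerre history of length $n$ is a pair $(\mathbf{s},\mathbf{p})$ with $\mathbf{s}$ a 2-Motzkin path of length $n$ and $\mathbf{p}=(p_1,\ldots,p_n)$ with $0\le p_i\le h_{i-1}(\mathbf{s})$; $\mathcal{LH}_n$ denotes the set of Laguerre histories of length $n$. Fran\c con–Viennot bijection $\psi_{FV}:\mathfrak{S}_{n+1}\to\mathcal{LH}_n$: for $\sigma\in\mathfrak{S}_{n+1}$ with convention $\sigma(0)=\sigma(n+2)=0$, a value $\sigma(j)$ is a peak if $\sigma(j-1)<\sigma(j)>\sigma(j+1)$, a valley if $\sigma(j-1)>\sigma(j)<\sigma(j+1)$, a double ascent if $\sigma(j-1)<\sigma(j)<\sigma(j+1)$, a double descent if $\sigma(j-1)>\sigma(j)>\sigma(j+1)$. Then $\psi_{FV}(\sigma)=(\mathbf{s},\mathbf{p})$ with, for $i=1,\ldots,n$, $s_i=\textsc{U}$ if $i$ is a valley, $\textsc{D}$ if $i$ is a peak, $\textsc{L}_b$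 if $i$ is a double ascent, $\textsc{L}_r$ if $i$ is a double descent of $\sigma$, and $p_i=(2\text{-}13)_i\sigma$, where $(2\text{-}13)_i\sigma=\#\{j: i<j<n+1,\ \sigma(j)<\sigma(i)<\sigma(j+1)\}$ (the number of occurrences of the vincular pattern $2\text{-}13$ in which the letter $i$ plays the role of the ''2''). Yan–Zhou–Lin bijection $\psi_{YZL}:\mathfrak{S}_{n+1}\to\mathcal{LH}_n$: for $\sigma\in\mathfrak{S}_{n+1}$, $\psi_{YZL}(\sigma)=(\mathbf{s},\mathbf{p})$ where for $i=1,\ldots,n$: $s_i=\textsc{U}$ if $i<\sigma(i)$ and $i+1\le\sigma^{-1}(i+1)$; $s_i=\textsc{D}$ if $i\ge\sigma(i)$ and $i+1>\sigma^{-1}(i+1)$; $s_i=\textsc{L}_b$ if $i<\sigma(i)$ and $i+1>\sigma^{-1}(i+1)$; $s_i=\textsc{L}_r$ if $i\ge\sigma(i)$ and $i+1\le\sigma^{-1}(i+1)$; and $p_i=\mathsf{nest}_i\sigma=\#\{j: j<i<\sigma(i)<\sigma(j)\ \text{or}\ \sigma(j)<\sigma(i)\le i<j\}$. The bijection $\Phi$ on $\mathfrak{S}_m$ (Clarke–Steingr\'imsson–Zeng): for $\sigma\in\mathfrak{S}_m$, a letter $\sigma(i)$ is a descent top (resp. descent bottom) if $\sigma(i)>\sigma(i+1)$ (resp. $\sigma(i-1)>\sigma(i)$). For a letter $x=\sigma(i)$ let $(2\text{-}31)_x\sigma=\#\{j: i<j<m,\ \sigma(j+1)<x<\sigma(j)\}$.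 Form two biwords $\binom{f}{f'}$ and $\binom{g}{g'}$, where $f$ (resp. $g$) is the increasing word of descent bottoms (resp. non-descent bottoms) of $\sigma$, and $f'$ (resp. $g'$) is the arrangement of the descent tops (resp. non-descent tops) of $\sigma$ such that the number of inversions in $f'$ having $x$ as bottom (resp. the number of inversions in $g'$ having $x$ as top) equals $(2\text{-}31)_x\sigma$ for each letter $x$. Concatenate to obtain the biword $\binom{f\,g}{f'\,g'}$, rearrange its columns so that the bottom row is increasing; the top row is $\Phi(\sigma)$. The bijection $\Psi$ on $\mathfrak{S}_{n+1}$: given $\sigma\in\mathfrak{S}_{n+1}$, let $\hat\sigma\in\mathfrak{S}_{n+2}$ be $\hat\sigma=(\sigma(1)+1)(\sigma(2)+1)\cdots(\sigma(n+1)+1)\,1$ and $\tau=\Phi(\hat\sigma)$ (which satisfies $\tau(1)=n+2$); then $\Psi(\sigma)=\tau(2)\cdots\tau(n+2)\in\mathfrak{S}_{n+1}$. *)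

(* Defs.v *)
(* Permutations of [m] = {1,...,m} are represented as
   words (seq nat) that are rearrangements of [:: 1; 2; ...; m]. *)
From mathcomp Require Import all_boot.
Set Implicit Arguments. Unset Strict Implicit. Unset Printing Implicit Defensive.

(* the letters U, D, L_r, L_b of 2-Motzkin paths *)
Inductive step := U | D | Lr | Lb.

Definition is_perm (m : nat) (s : seq nat) := perm_eq s (iota 1 m).

(* s(j) for 1 <= j <= size s, and 0 otherwise (so s(0) = s(m+1) = 0) *)
Definition at_ (s : seq nat) (j : nat) : nat :=
  if j is j'.+1 then nth 0 s j' else 0.

(* s^{-1}(x): the position (1-based) of the letter x in s *)
Definition pos (s : seq nat) (x : nat) : nat := (index x s).+1.

(* Laguerre histories are pairs (path, weights) *)
Definition LH := (seq step * seq nat)%type.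

Definition fv_step (s : seq nat) (i : nat) : step :=
  let j := pos s i in
  let a := at_ s j.-1 in let b := at_ s j.+1 in
  if (i < a) && (i < b) then U
  else if (a < i) && (b < i) then D
  else if (a < i) && (i < b) then Lb
  else Lr.

Definition pat2_13 (s : seq nat) (i : nat) : nat :=
  let n := (size s).-1 in
  count (fun j => (at_ s j < i) && (i < at_ s j.+1))
        (iota (pos s i).+1 (n - pos s i)).

Definition psi_FV (s : seq nat) : LH :=
  let n := (size s).-1 in
  ([seq fv_step s i | i <- iota 1 n], [seq pat2_13 s i | i <- iota 1 n]).

Definition yzl_step (s : seq nat) (i : nat) : step :=
  if i < at_ s i then (if i.+1 <= pos s i.+1 then U else Lb)
  else (if i.+1 <= pos s i.+1 then Lr else D).

Definition nest (s : seq nat) (i : nat) : nat :=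
  count (fun j => ((j < i) && (i < at_ s i) && (at_ s i < at_ s j))
               || ((at_ s j < at_ s i) && (at_ s i <= i) && (i < j)))
        (iota 1 (size s)).

Definition psi_YZL (s : seq nat) : LH :=
  let n := (size s).-1 in
  ([seq yzl_step s i | i <- iota 1 n], [seq nest s i | i <- iota 1 n]).

Definition descent_top (s : seq nat) (x : nat) : bool :=
  has (fun i => (at_ s i == x) && (at_ s i.+1 < at_ s i)) (iota 1 (size s).-1).

Definition descent_bottom (s : seq nat) (x : nat) : bool :=
  has (fun i => (at_ s i == x) && (at_ s i < at_ s i.-1)) (iota 2 (size s).-1).

Definition pat2_31 (s : seq nat) (x : nat) : nat :=
  count (fun j => (at_ s j.+1 < x) && (x < at_ s j))
        (iota (pos s x).+1 (size s - (pos s x).+1)).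

(* Phi_spec s t : t = Phi(s), for some admissible arrangements f', g' of the
   descent tops / non-descent tops.  The number of inversions of f' having x
   as bottom is #{y before x in f' | y > x}; the number of inversions of g'
   having x as top is #{y after x in g' | y < x}. *)
Definition Phi_spec (s t : seq nat) : Prop :=
  let f := sort leq (filter (descent_bottom s) s) in
  let g := sort leq (filter (fun x => ~~ descent_bottom s x) s) in
  exists (f' g' : seq nat),
    [/\ perm_eq f' (filter (descent_top s) s),
        perm_eq g' (filter (fun x => ~~ descent_top s x) s),
        (forall k, k < size f' ->
           count (fun y => nth 0 f' k < y) (take k f') = pat2_31 s (nth 0 f' k)),
        (forall k, k < size g' ->
           count (fun y => y < nth 0 g' k) (drop k.+1 g') = pat2_31 s (nth 0 g' k))
      & (* columns of (f g / f' g') sorted by bottom row; t is the top row *)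
        t = [seq nth 0 (f ++ g) (index y (f' ++ g')) | y <- iota 1 (size s)]].

Definition hat (s : seq nat) : seq nat := rcons [seq x.+1 | x <- s] 1.

(* Psi(s) = t(2) ... t(n+2) where t = Phi(hat s) *)
Definition Psi_of (t : seq nat) : seq nat := behead t.

(* Main.v *)
Require Import Defs.
From mathcomp Require Import all_boot zify.
Set Implicit Arguments. Unset Strict Implicit. Unset Printing Implicit Defensive.


Lemma count_take_index (Q : pred nat) (L : seq nat) k :
  uniq L -> count (fun y => Q y && (index y L < k)) L = count Q (take k L).
Proof.
elim: L k => [|a L IH] k //= /andP [aL uL].
rewrite eqxx /=.
have E : forall k', count (fun y => Q y && ((if a == y then 0 else (index y L).+1) < k')) L
   = count (fun y => Q y && (index y L < k'.-1)) L.
  move=> k'; apply: eq_in_count => y yL.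
  have -> : (a == y) = false by apply/eqP => ay; rewrite ay yL in aL.
  by case: k'.
case: k => [|k] /=.
  rewrite E /= ltn0 andbF /=.
  by rewrite (eq_count (a2 := pred0)) ?count_pred0 // => y; rewrite ltn0 andbF.
by rewrite E IH // andbT.
Qed.

Lemma count_drop_index (Q : pred nat) (L : seq nat) k :
  uniq L -> count (fun y => Q y && (k < index y L)) L = count Q (drop k.+1 L).
Proof.
elim: L k => [|a L IH] k //= /andP [aL uL].
rewrite eqxx /= ltn0 andbF add0n.
case: k => [|k].
  rewrite drop0; apply: eq_in_count => y yL.
  have -> : (a == y) = false by apply/eqP => ay; rewrite ay yL in aL.
  by rewrite andbT.
rewrite -IH //; apply: eq_in_count => y yL.
have -> : (a == y) = false by apply/eqP => ay; rewrite ay yL in aL.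
by [].
Qed.

Lemma sorted_nth_lt (f : seq nat) a b :
  sorted leq f -> uniq f -> a < size f -> b < size f ->
  (nth 0 f a < nth 0 f b) = (a < b).
Proof.
move=> so u ha hb.
have mono := sorted_leq_nth leq_trans leqnn 0 so.
case: (ltngtP a b) => hab.
- have le := mono a b ha hb (ltnW hab).
  rewrite ltn_neqAle le andbT.
  by rewrite nth_uniq // neq_ltn hab.
- by apply/negbTE; rewrite -leqNgt; apply: mono => //; apply: ltnW.
- by rewrite hab ltnn.
Qed.

Lemma sorted_count_lt (f : seq nat) k y :
  sorted leq f -> k < size f ->
  (nth 0 f k < y) = (k < count (fun z => z < y) f).
Proof.
move=> so hk.
have mono := sorted_leq_nth leq_trans leqnn 0 so.
have -> : count (fun z => z < y) f = count (fun z => z < y) (take k.+1 f) + count (fun z => z < y) (drop k.+1 f) by rewrite -count_cat cat_take_drop.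
apply/idP/idP => H.
- have : count (fun z => z < y) (take k.+1 f) = k.+1.
    have A : all (fun z => z < y) (take k.+1 f).
      apply/(all_nthP 0) => j; rewrite size_takel // => hj.
    rewrite nth_take //; apply: (leq_ltn_trans _ H); apply: mono; rewrite ?inE; lia.
    by move: A; rewrite all_count size_takel // => /eqP.
  by move=> ->; apply: leq_addr.
- apply: contraLR H; rewrite -!leqNgt => H.
  have -> : count (fun z => z < y) (drop k.+1 f) = 0.
    apply/eqP; rewrite -leqn0 leqNgt -has_count; apply/hasPn => z.
    move=> /(nthP 0) [j]; rewrite size_drop => hj <-.
    rewrite nth_drop -leqNgt; apply: (leq_trans H); apply: mono => //.
      by rewrite inE /=; move: hj; rewrite ltn_subRL.
    lia.
  rewrite addn0 (take_nth 0 hk) -cats1 count_cat /= ltnNge H /= addn0.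
  have := count_size (fun z => z < y) (take k f).
  by rewrite size_takel ?addn0 //; apply: ltnW.
Qed.


Lemma arrange (r : nat -> nat -> bool) (S : seq nat) (c : nat -> nat) :
  (forall x, r x x = false) ->
  (forall S0 : seq nat, S0 != [::] -> exists2 z, z \in S0 &
      forall y, y \in S0 -> y != z -> r z y && ~~ r y z) ->
  uniq S -> (forall x, x \in S -> c x <= count (r x) S) ->
  exists L, perm_eq L S /\ forall k, k < size L ->
     count (r (nth 0 L k)) (take k L) = c (nth 0 L k).
Proof.
move=> irr ext.
move: {2}(size S) (erefl (size S)) => n; elim: n S => [|n IH] S hS uS hc.
  by exists [::]; case: S hS {uS hc} => //.
have [z zS hz] : exists2 z, z \in S & forall y, y \in S -> y != z -> r z y && ~~ r y z.
  by apply: ext; case: S hS {uS hc}.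
set S' := rem z S.
have pS : perm_eq S (z :: S') by apply: perm_to_rem.
have uS' : uniq S' by apply: rem_uniq.
have zS' : z \notin S'.
  by move: uS; rewrite (perm_uniq pS) /= => /andP [].
have memS' : forall y, y \in S' -> y \in S /\ y != z.
  move=> y yS; split; first by rewrite (perm_mem pS) inE yS orbT.
  by apply: contraNneq zS' => <-.
have szS' : size S' = n by move: hS; rewrite (perm_size pS) /= => -[].
have [L' [pL' hL']] : exists L', perm_eq L' S' /\ forall k, k < size L' ->
     count (r (nth 0 L' k)) (take k L') = c (nth 0 L' k).
  apply: IH => // x xS'.
  have [xS xz] := memS' x xS'.
  have := hc x xS; rewrite (permP pS) /=.
  have := hz x xS xz => /andP [_ /negbTE ->] //.
have allz : forall y, y \in L' -> r z y /\ ~~ r y z.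
  move=> y; rewrite (perm_mem pL') => /memS' [yS yz].
  by have /andP [] := hz y yS yz.
have cntz : count (r z) S = size L'.
  rewrite (permP pS) /= irr add0n -(permP pL').
  apply/eqP; rewrite -all_count; apply/allP => y yL'.
  by have [] := allz y yL'.
set j := c z.
have hj : j <= size L' by rewrite -cntz; apply: hc.
exists (take j L' ++ z :: drop j L'); split.
  have H : perm_eq (take j L' ++ z :: drop j L') (z :: S').
    rewrite -[z :: drop j L']/([:: z] ++ drop j L') perm_catCA /= perm_cons.
    by rewrite cat_take_drop.
  by apply: (perm_trans H); rewrite perm_sym.
move=> k; rewrite size_cat size_takel //= size_drop addnS subnKC // ltnS => hk.
have szt : size (take j L') = j by rewrite size_takel.
case: (ltngtP k j) => hkj.
- rewrite nth_cat szt hkj take_cat szt hkj.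
  rewrite (nth_take _ hkj) -(hL' k) ?(leq_trans hkj) // take_takel //.
  exact: ltnW.
- have e : k = j + (k - j.+1).+1 by lia.
  have hk' : j + (k - j.+1) < size L' by rewrite -ltnS -addnS -e ltnS.
  rewrite e nth_cat szt ltnNge leq_addr /= addKn /= nth_drop.
  rewrite take_cat szt ltnNge leq_addr /= addKn /= count_cat /=.
  set x := nth 0 L' _.
  have xL : x \in L' by apply: mem_nth.
  have [_ /negbTE ->] := allz x xL.
  rewrite add0n -count_cat -takeD hL' //.
- rewrite hkj nth_cat szt ltnn subnn /= take_cat szt ltnn.
  have A : all (r z) (take j L').
    by apply/allP => y /mem_take yL; have [] := allz y yL.
  by move: A; rewrite all_count szt subnn cats0 => /eqP.
Qed.

Lemma ex_min_seq (S0 : seq nat) : S0 != [::] ->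
  exists2 z, z \in S0 & forall y, y \in S0 -> z <= y.
Proof.
elim: S0 => [|a S IH] // _.
case: S IH => [|b S] IH.
  by exists a => [|y]; rewrite ?inE // => /eqP ->.
have [z zS hz] := IH isT.
case: (leqP a z) => haz.
  exists a; first by rewrite inE eqxx.
  move=> y; rewrite inE => /orP [/eqP -> //|/hz]; exact: leq_trans.
exists z; first by rewrite inE zS orbT.
move=> y; rewrite inE => /orP [/eqP -> |/hz //]; exact: ltnW.
Qed.

Lemma ex_max_seq (S0 : seq nat) : S0 != [::] ->
  exists2 z, z \in S0 & forall y, y \in S0 -> y <= z.
Proof.
elim: S0 => [|a S IH] // _.
case: S IH => [|b S] IH.
  by exists a => [|y]; rewrite ?inE // => /eqP ->.
have [z zS hz] := IH isT.
case: (leqP z a) => haz.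
  exists a; first by rewrite inE eqxx.
  move=> y; rewrite inE => /orP [/eqP -> //|/hz h]; exact: leq_trans h haz.
exists z; first by rewrite inE zS orbT.
move=> y; rewrite inE => /orP [/eqP -> |/hz //]; exact: ltnW.
Qed.

Lemma arrF (S : seq nat) (c : nat -> nat) :
  uniq S -> (forall x, x \in S -> c x <= count (fun y => x < y) S) ->
  exists L, perm_eq L S /\ forall k, k < size L ->
     count (fun y => nth 0 L k < y) (take k L) = c (nth 0 L k).
Proof.
move=> uS hc.
apply: (arrange (r := fun x y => x < y)) => //; first by move=> x; rewrite ltnn.
move=> S0 /ex_min_seq [z zS hz]; exists z => // y yS yz.
have := hz y yS; rewrite leq_eqVlt eq_sym (negbTE yz) /= => h.
by rewrite h -leqNgt ltnW.
Qed.

Lemma arrG (S : seq nat) (c : nat -> nat) :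
  uniq S -> (forall x, x \in S -> c x <= count (fun y => y < x) S) ->
  exists L, perm_eq L S /\ forall k, k < size L ->
     count (fun y => y < nth 0 L k) (drop k.+1 L) = c (nth 0 L k).
Proof.
move=> uS hc.
have [L0 [pL0 hL0]] : exists L, perm_eq L S /\ forall k, k < size L ->
     count (fun y => y < nth 0 L k) (take k L) = c (nth 0 L k).
  apply: (arrange (r := fun x y => y < x)) => //; first by move=> x; rewrite ltnn.
  move=> S0 /ex_max_seq [z zS hz]; exists z => // y yS yz.
  have := hz y yS; rewrite leq_eqVlt (negbTE yz) /= => h.
  by rewrite h -leqNgt ltnW.
exists (rev L0); split; first by rewrite perm_rev.
move=> k; rewrite size_rev => hk.
rewrite nth_rev // drop_rev count_rev.
have -> : size L0 - k.+1 = size L0 - k.+1 by [].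
apply: hL0; lia.
Qed.


Lemma at_pos s x : x \in s -> at_ s (pos s x) = x.
Proof. by move=> xs; rewrite /pos /= nth_index. Qed.

Lemma pos_le s x : x \in s -> pos s x <= size s.
Proof. by move=> xs; rewrite /pos index_mem. Qed.

Lemma at_mem s j : 1 <= j <= size s -> at_ s j \in s.
Proof. by case: j => //= j h; apply: mem_nth. Qed.

Lemma at_out s j : ~~ (1 <= j <= size s) -> at_ s j = 0.
Proof.
case: j => //= j h; apply: nth_default; rewrite leqNgt; exact: h.
Qed.

Lemma at_eq w i j : uniq w -> 1 <= i <= size w -> 1 <= j <= size w ->
  (at_ w i == at_ w j) = (i == j).
Proof.
case: i => // i; case: j => // j u /andP [_ hi] /andP [_ hj] /=.
by rewrite nth_uniq.
Qed.

Lemma pos_at w j : uniq w -> 1 <= j <= size w -> pos w (at_ w j) = j.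
Proof.
case: j => // j u /andP [_ hj] /=; rewrite /pos index_uniq //.
Qed.

Lemma at_eq_x w x j : uniq w -> x \in w -> 1 <= j <= size w ->
  (at_ w j == x) = (j == pos w x).
Proof.
move=> u xw hj; rewrite -{1}(at_pos xw) at_eq //.
by rewrite pos_le // /pos.
Qed.

Lemma has_pick (f P : pred nat) l k :
  (forall j, j \in l -> f j = (j == k)) ->
  has (fun j => f j && P j) l = (k \in l) && P k.
Proof.
elim: l => [|a l IH] //= h.
rewrite inE h ?inE ?eqxx // IH; last by move=> j jl; apply: h; rewrite inE jl orbT.
case: (eqVneq a k) => [->|ak] /=; first by case: (P k); rewrite ?andbF.
by [].
Qed.

Lemma w_map w : map (at_ w) (iota 1 (size w)) = w.
Proof.
rewrite -(addn0 1) iotaDl -map_comp.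
rewrite (eq_map (g := nth 0 w)); first exact: (mkseq_nth 0 w).
move=> j.
by [].
Qed.

Lemma count_w w (P : pred nat) :
  count P w = count (fun i => P (at_ w i)) (iota 1 (size w)).
Proof. by rewrite -{1}(w_map w) count_map. Qed.

Lemma dt_pos w x : uniq w -> x \in w ->
  descent_top w x = (pos w x < size w) && (at_ w (pos w x).+1 < x).
Proof.
move=> u xw; rewrite /descent_top.
rewrite (@has_pick (fun i => at_ w i == x) (fun i => at_ w i.+1 < at_ w i) _ (pos w x)).
  rewrite at_pos // mem_iota.
  have := pos_le xw; rewrite /pos; set m := size w; lia.
move=> j; rewrite mem_iota => hj; apply: at_eq_x => //; set m := size w in hj *; lia.
Qed.

Lemma db_pos w x : uniq w -> x \in w ->
  descent_bottom w x = (x < at_ w (pos w x).-1).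
Proof.
move=> u xw; rewrite /descent_bottom.
rewrite (@has_pick (fun i => at_ w i == x) (fun i => at_ w i < at_ w i.-1) _ (pos w x)).
  rewrite at_pos // mem_iota.
  have := pos_le xw; rewrite /pos.
  case: (index x w) => [|k] /= h; first by rewrite ltn0.
  have -> : k.+2 < 2 + (size w).-1 by set m := size w in h *; lia.
  by [].
move=> j; rewrite mem_iota => hj; apply: at_eq_x => //; set m := size w in hj *; lia.
Qed.

Lemma count_add3 (P Q R T : pred nat) l :
  (forall i, (P i : nat) = Q i + R i + T i) ->
  count P l = count Q l + count R l + count T l.
Proof.
move=> h; elim: l => [|a l IH] //=; rewrite IH h; lia.
Qed.

Definition cc (w : seq nat) x :=
  count (fun j => (at_ w j.+1 < x) && (x < at_ w j)) (iota 1 (size w).-1).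

Lemma A1 w x : uniq w ->
  count (fun y => descent_bottom w y && (y < x)) w =
  count (fun y => descent_top w y && (y < x)) w + descent_top w x + cc w x.
Proof.
move=> u; rewrite !(count_w w) /cc.
case E : (size w) => [|m].
  by rewrite /descent_top E.
have mem1 : forall i, i \in iota 1 m.+1 -> at_ w i \in w.
  by move=> i; rewrite mem_iota => h; apply: at_mem; rewrite E; lia.
have pa : forall i, i \in iota 1 m.+1 -> pos w (at_ w i) = i.
  by move=> i; rewrite mem_iota => h; apply: pos_at; rewrite ?E; lia.
rewrite (eq_in_count (a2 := fun i => (at_ w i < at_ w i.-1) && (at_ w i < x))); last first.
  by move=> i hi /=; rewrite db_pos ?mem1 ?pa.
rewrite (eq_in_count (a1 := fun i => descent_top w (at_ w i) && (at_ w i < x))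
   (a2 := fun i => (i < m.+1) && (at_ w i.+1 < at_ w i) && (at_ w i < x))); last first.
  by move=> i hi /=; rewrite dt_pos ?mem1 ?pa // E.
have -> : count (fun i => (at_ w i < at_ w i.-1) && (at_ w i < x)) (iota 1 m.+1)
   = count (fun i => (at_ w i.+1 < at_ w i) && (at_ w i.+1 < x)) (iota 1 m).
  rewrite /= add0n (iotaDl 1 1 m) count_map.
  by apply: eq_count => i.
have -> : count (fun i => (i < m.+1) && (at_ w i.+1 < at_ w i) && (at_ w i < x)) (iota 1 m.+1)
   = count (fun i => (at_ w i.+1 < at_ w i) && (at_ w i < x)) (iota 1 m).
  rewrite -addn1 iotaD count_cat /= add1n addn1 ltnn /= !addn0.
  by apply: eq_in_count => i; rewrite mem_iota => hi; rewrite (_ : i < m.+1) //; lia.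
have -> : nat_of_bool (descent_top w x) = count (fun i => (at_ w i == x) && (at_ w i.+1 < at_ w i)) (iota 1 m).
  have le1 : count (fun i => (at_ w i == x) && (at_ w i.+1 < at_ w i)) (iota 1 m) <= 1.
    apply: (@leq_trans (count (fun i => at_ w i == x) (iota 1 m.+1))).
      rewrite -(addn1 m) iotaD count_cat; apply: leq_trans (leq_addr _ _).
      by apply: sub_count => i /andP [].
    rewrite -E -(count_w w (pred1 x)).
    by rewrite count_uniq_mem //; case: (x \in w).
  rewrite /descent_top E /= has_count.
  by case: (count _ _) le1 => [|[|]].
apply: count_add3 => i /=.
case: (ltngtP (at_ w i.+1) (at_ w i)) => h1;
case: (ltngtP (at_ w i) x) => h2;
case: (ltngtP (at_ w i.+1) x) => h3 //=; lia.
Qed.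

Lemma A2 w x : x \in w -> pat2_31 w x <= cc w x.
Proof.
move=> xw; rewrite /pat2_31 /cc.
have := pos_le xw; set p := pos w x; set m := size w => hp.
case: (ltnP p m) => h; last by rewrite (_ : m - p.+1 = 0) //; lia.
have -> : m.-1 = p + (m - p.+1) by lia.
by rewrite iotaD count_cat add1n leq_addl.
Qed.

Lemma tele w x a k : (forall j, a <= j <= a + k -> at_ w j != x) ->
  count (fun j => (at_ w j.+1 < x) && (x < at_ w j)) (iota a k) + (x < at_ w (a + k))
  = count (fun j => (at_ w j < x) && (x < at_ w j.+1)) (iota a k) + (x < at_ w a).
Proof.
elim: k => [|k IH] h; first by rewrite addn0.
have IH' := IH (fun j hj => h j (ltac:(lia))).
have hA := h (a + k) (ltac:(lia)).
have hB := h (a + k).+1 (ltac:(lia)).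
rewrite -(addn1 k) !iotaD !count_cat addnA addn1 -addnS.
set c1 := count _ (iota a k) in IH' *.
set c2 := count _ (iota a k) in IH' *.
move: IH' hA hB; rewrite /= addn0 addnS.
case: (ltngtP (at_ w (a + k)) x) => h1;
case: (ltngtP (nth 0 w (a + k)) x) => h2 //=; lia.
Qed.

Definition qq (w : seq nat) x :=
  count (fun j => (at_ w j < x) && (x < at_ w j.+1))
        (iota (pos w x).+1 (size w - (pos w x).+1)).

Lemma A3 w x : uniq w -> x \in w -> pos w x < size w -> at_ w (size w) < x ->
  pat2_31 w x = qq w x + (x < at_ w (pos w x).+1).
Proof.
move=> u xw hp hl.
have := tele (w := w) (x := x) (a := (pos w x).+1) (k := size w - (pos w x).+1).
rewrite (_ : (pos w x).+1 + (size w - (pos w x).+1) = size w); last by set m := size w in hp *; lia.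
rewrite ltnNge (ltnW hl) addn0 /pat2_31 /qq => -> //.
move=> j hj; rewrite at_eq_x //; last by set m := size w in hp hj *; lia.
by apply/eqP => e; move: hj; rewrite e ltnn.
Qed.

Lemma at_ne w x j : uniq w -> x \in w -> 0 < x -> j != pos w x -> at_ w j != x.
Proof.
move=> u xw x0 hj; case: (boolP (1 <= j <= size w)) => h.
  by rewrite at_eq_x.
by rewrite at_out // eq_sym -lt0n.
Qed.


Lemma at_le w j : perm_eq w (iota 1 (size w)) -> at_ w j <= size w.
Proof.
move=> pw; case: (boolP (1 <= j <= size w)) => h; last by rewrite at_out.
have := at_mem h; rewrite (perm_mem pw) mem_iota; set m := size w; lia.
Qed.

Lemma mem_w_le w y : perm_eq w (iota 1 (size w)) -> y \in w -> 1 <= y <= size w.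
Proof. move=> pw; rewrite (perm_mem pw) mem_iota; set m := size w; lia. Qed.

Lemma count_db_dt w : uniq w -> perm_eq w (iota 1 (size w)) ->
  count (descent_bottom w) w = count (descent_top w) w.
Proof.
move=> u pw.
have := A1 (size w).+1 u.
have big : forall y, y \in w -> y < (size w).+1.
  by move=> y /(mem_w_le pw); set m := size w; lia.
rewrite (eq_in_count (a2 := descent_bottom w)); last by move=> y /big ->; rewrite andbT.
rewrite (eq_in_count (a1 := fun y => descent_top w y && _) (a2 := descent_top w)); last by move=> y /big ->; rewrite andbT.
have -> : descent_top w (size w).+1 = false.
  apply/negbTE/hasPn => i; rewrite mem_iota => hi.
  have := at_le i pw => hle.
  by apply/negP => /andP [/eqP e _]; move: hle; rewrite e ltnn.
have -> : cc w (size w).+1 = 0.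
  apply/eqP; rewrite -leqn0 leqNgt -has_count; apply/hasPn => j _.
  have := at_le j pw => hle.
  by apply/negP => /andP [_ h]; move: h; rewrite ltnNge ltnW.
by rewrite !addn0.
Qed.

Lemma count_split (a P : pred nat) l :
  count P l = count (fun y => a y && P y) l + count (fun y => ~~ a y && P y) l.
Proof. elim: l => //= x l ->; case: (a x); case: (P x) => /=; lia. Qed.

Section Tau.
Variable w : seq nat.
Hypothesis u : uniq w.
Hypothesis pw : perm_eq w (iota 1 (size w)).
Variables f' g' : seq nat.
Hypothesis pf : perm_eq f' (filter (descent_top w) w).
Hypothesis pg : perm_eq g' (filter (fun x => ~~ descent_top w x) w).
Hypothesis cf : forall k, k < size f' ->
  count (fun y => nth 0 f' k < y) (take k f') = pat2_31 w (nth 0 f' k).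
Hypothesis cg : forall k, k < size g' ->
  count (fun y => y < nth 0 g' k) (drop k.+1 g') = pat2_31 w (nth 0 g' k).

Definition fs := sort leq (filter (descent_bottom w) w).
Definition gs := sort leq (filter (fun x => ~~ descent_bottom w x) w).
Definition tau y := nth 0 (fs ++ gs) (index y (f' ++ g')).

Lemma uf : uniq f'. Proof. by rewrite (perm_uniq pf) filter_uniq. Qed.
Lemma ug : uniq g'. Proof. by rewrite (perm_uniq pg) filter_uniq. Qed.
Lemma ufs : uniq fs. Proof. by rewrite sort_uniq filter_uniq. Qed.
Lemma ugs : uniq gs. Proof. by rewrite sort_uniq filter_uniq. Qed.
Lemma sfs : sorted leq fs. Proof. exact: (sort_sorted leq_total). Qed.
Lemma sgs : sorted leq gs. Proof. exact: (sort_sorted leq_total). Qed.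

Lemma memf y : (y \in f') = (y \in w) && descent_top w y.
Proof. by rewrite (perm_mem pf) mem_filter andbC. Qed.
Lemma memg y : (y \in g') = (y \in w) && ~~ descent_top w y.
Proof. by rewrite (perm_mem pg) mem_filter andbC. Qed.
Lemma memfs y : (y \in fs) = (y \in w) && descent_bottom w y.
Proof. by rewrite mem_sort mem_filter andbC. Qed.
Lemma memgs y : (y \in gs) = (y \in w) && ~~ descent_bottom w y.
Proof. by rewrite mem_sort mem_filter andbC. Qed.

Lemma size_f : size fs = size f'.
Proof.
rewrite size_sort (perm_size pf) !size_filter; exact: count_db_dt.
Qed.

Lemma size_g : size gs = size g'.
Proof.
rewrite size_sort (perm_size pg) !size_filter.
have e1 : count (fun x => ~~ descent_bottom w x) w = size w - count (descent_bottom w) w.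
  by rewrite -(count_predC (descent_bottom w) w) addKn.
have e2 : count (fun x => ~~ descent_top w x) w = size w - count (descent_top w) w.
  by rewrite -(count_predC (descent_top w) w) addKn.
by rewrite e1 e2 (count_db_dt u pw).
Qed.

Lemma cnt_fs (P : pred nat) : count P fs = count (fun y => descent_bottom w y && P y) w.
Proof. rewrite (permP (permEl (perm_sort leq _))) count_filter; apply: eq_count => y /=; by rewrite andbC. Qed.
Lemma cnt_gs (P : pred nat) : count P gs = count (fun y => ~~ descent_bottom w y && P y) w.
Proof. rewrite (permP (permEl (perm_sort leq _))) count_filter; apply: eq_count => y /=; by rewrite andbC. Qed.
Lemma cnt_f (P : pred nat) : count P f' = count (fun y => descent_top w y && P y) w.
Proof. rewrite (permP pf) count_filter; apply: eq_count => y /=; by rewrite andbC. Qed.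
Lemma cnt_g (P : pred nat) : count P g' = count (fun y => ~~ descent_top w y && P y) w.
Proof. rewrite (permP pg) count_filter; apply: eq_count => y /=; by rewrite andbC. Qed.

Lemma tau_f k : k < size f' -> tau (nth 0 f' k) = nth 0 fs k.
Proof.
move=> hk; rewrite /tau index_cat mem_nth // index_uniq //; last exact: uf.
by rewrite nth_cat size_f hk.
Qed.

Lemma tau_g k : k < size g' -> tau (nth 0 g' k) = nth 0 gs k.
Proof.
move=> hk; rewrite /tau index_cat.
have : nth 0 g' k \in g' by apply: mem_nth.
rewrite memg => /andP [_ hn].
have -> : (nth 0 g' k \in f') = false by rewrite memf (negbTE hn) andbF.
rewrite index_uniq //; last exact: ug.
by rewrite nth_cat size_f ltnNge leq_addr /= addKn.
Qed.

Lemma tau_dt y : y \in w -> descent_top w y -> tau y < y /\ descent_bottom w (tau y).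
Proof.
move=> yw hy.
have yf : y \in f' by rewrite memf yw hy.
set k := index y f'.
have hk : k < size f' by rewrite index_mem.
have ey : nth 0 f' k = y by apply: nth_index.
rewrite -ey tau_f // ey.
split; last first.
  have : nth 0 fs k \in fs by apply: mem_nth; rewrite size_f.
  by rewrite memfs => /andP [].
rewrite sorted_count_lt ?sfs ?size_f // cnt_fs.
rewrite (A1 y u) hy.
have hc := cf hk; rewrite ey in hc.
have hp := A2 yw.
have yt : y \notin take k f'.
  by apply/negP => /index_ltn; rewrite ltnn.
have h1 : count (fun z => z < y) (take k f') <= count (fun y0 => descent_top w y0 && (y0 < y)) w.
  by rewrite -cnt_f; rewrite -{2}(cat_take_drop k f') count_cat leq_addr.
have h2 : k = count (fun z => z < y) (take k f') + count (fun z => y < z) (take k f').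
  have := count_predC (fun z => z < y) (take k f').
  rewrite size_takel; last exact: ltnW.
  rewrite (eq_in_count (a1 := predC _) (a2 := fun z => y < z)) //.
  move=> z zt /=; rewrite -leqNgt leq_eqVlt.
  by have -> : (y == z) = false by apply/eqP => e; rewrite e zt in yt.
rewrite hc in h2; set a := count _ w in h1 *; lia.
Qed.

Lemma tau_ndt y : y \in w -> ~~ descent_top w y -> y <= tau y /\ ~~ descent_bottom w (tau y).
Proof.
move=> yw hy.
have yg : y \in g' by rewrite memg yw hy.
set k := index y g'.
have hk : k < size g' by rewrite index_mem.
have ey : nth 0 g' k = y by apply: nth_index.
rewrite -ey tau_g // ey.
split; last first.
  have : nth 0 gs k \in gs by apply: mem_nth; rewrite size_g.
  by rewrite memgs => /andP [].
rewrite leqNgt sorted_count_lt ?sgs ?size_g // cnt_gs -leqNgt.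
have hA := A1 y u; rewrite (negbTE hy) addn0 in hA.
have hp := A2 yw.
have hc := cg hk; rewrite ey in hc.
have s1 := count_split (descent_bottom w) (fun z => z < y) w.
have s2 := count_split (descent_top w) (fun z => z < y) w.
have h3 : count (fun z => ~~ descent_top w z && (z < y)) w <= k + pat2_31 w y.
  rewrite -cnt_g -{1}(cat_take_drop k g') (drop_nth 0 hk) ey count_cat /= ltnn add0n hc.
  rewrite leq_add2r; have := count_size (fun z => z < y) (take k g').
  by rewrite size_takel //; apply: ltnW.
move: hA s1 s2 h3 hp.
set a1 := count _ w; set a2 := count _ w; set a3 := count _ w; set a4 := count _ w.
set a5 := count _ w; set a6 := cc w y; set a7 := pat2_31 w y. lia.
Qed.

Hypothesis hl : at_ w (size w) = 1.
Hypothesis hm2 : 2 <= size w.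

Lemma one_w : 1 \in w.
Proof. rewrite -hl; apply: at_mem; have H2 := hm2; set m := size w in H2 *; lia. Qed.

Lemma pos_one : pos w 1 = size w.
Proof. rewrite -{1}hl pos_at //; have H2 := hm2; set m := size w in H2 *; lia. Qed.

Lemma ndt_one : ~~ descent_top w 1.
Proof. by rewrite dt_pos ?one_w // pos_one ltnn. Qed.

Lemma p_pos z : z \in w -> ~~ descent_top w z -> z != 1 -> 0 < pat2_31 w z.
Proof.
move=> zw hz z1.
have hpz : pos w z < size w.
  rewrite ltn_neqAle pos_le // andbT; apply/eqP => e.
  by move: z1; rewrite -(at_pos zw) e hl eqxx.
have hlz : at_ w (size w) < z.
  rewrite hl ltn_neqAle eq_sym z1 /=.
  by have := mem_w_le pw zw => /andP [].
rewrite (A3 u zw hpz hlz).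
move: hz; rewrite dt_pos // hpz /= -leqNgt leq_eqVlt => /orP [/eqP e|->]; last by rewrite addn1.
have : at_ w (pos w z).+1 == z by rewrite /= -e.
rewrite at_eq_x //; last by have H2 := hm2; set m := size w in H2 hpz *; lia.
Qed.
Lemma last_g : nth 0 g' (size g').-1 = 1.
Proof.
have og : 1 \in g' by rewrite memg one_w ndt_one.
have sg : 0 < size g' by case: (g') og.
set z := nth 0 g' _.
have zg : z \in g' by apply: mem_nth; rewrite prednK.
have := cg (ltac:(rewrite prednK //) : (size g').-1 < size g').
rewrite prednK // drop_size /= => /esym hp.
apply/eqP; apply: contraT => z1.
move: zg; rewrite memg => /andP [zw hz].
by have := p_pos zw hz z1; rewrite hp.
Qed.

Lemma m_gs : size w \in gs.
Proof.
have mw : size w \in w by rewrite (perm_mem pw) mem_iota; have H2 := hm2; set m := size w in H2 *; lia.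
rewrite memgs mw /= db_pos // -leqNgt; exact: at_le.
Qed.

Lemma last_gs : nth 0 gs (size gs).-1 = size w.
Proof.
have sg : 0 < size gs by case: gs m_gs.
apply/eqP; rewrite eqn_leq; apply/andP; split.
  have : nth 0 gs (size gs).-1 \in gs by apply: mem_nth; rewrite prednK.
  by rewrite memgs => /andP [/(mem_w_le pw) /andP [_ ->]].
rewrite -{1}(nth_index 0 m_gs).
apply: (sorted_leq_nth leq_trans leqnn 0 sgs); rewrite ?inE ?index_mem ?m_gs ?prednK //.
by rewrite -ltnS prednK // index_mem m_gs.
Qed.

Lemma tau_one : tau 1 = size w.
Proof.
have og : 1 \in g' by rewrite memg one_w ndt_one.
have sg : 0 < size g' by case: (g') og.
by rewrite -{1}last_g tau_g ?prednK // -size_g last_gs.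
Qed.

Lemma tau_lt_m y : y \in w -> y != 1 -> tau y < size w.
Proof.
move=> yw y1; case: (boolP (descent_top w y)) => hy.
  have [h _] := tau_dt yw hy; apply: (leq_trans h).
  by have := mem_w_le pw yw => /andP [].
have yg : y \in g' by rewrite memg yw hy.
have og : 1 \in g' by rewrite memg one_w ndt_one.
have sg : 0 < size g' by case: (g') og.
set k := index y g'.
have hk : k < size g' by rewrite index_mem.
have hk' : k != (size g').-1.
  by apply/eqP => e; move: y1; rewrite -(nth_index 0 yg) -/k e last_g eqxx.
rewrite -(nth_index 0 yg) tau_g // -last_gs sorted_nth_lt ?sgs ?ugs ?size_g //.
  by rewrite ltn_neqAle hk' /= -ltnS prednK.
by rewrite prednK.
Qed.

Lemma T6 x : x \in w -> descent_top w x ->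
  pat2_31 w x = count (fun y => (x < y) && (tau y < tau x)) w.
Proof.
move=> xw hx.
rewrite (count_split (descent_top w)).
rewrite (eq_in_count (a1 := fun y => ~~ descent_top w y && _) (a2 := pred0)); last first.
  move=> y yw /=; apply/negbTE; apply/negP => /andP [hy /andP [xy ty]].
  have [t1 _] := tau_ndt yw hy; have [t2 _] := tau_dt xw hx; lia.
rewrite count_pred0 addn0 -cnt_f.
have xf : x \in f' by rewrite memf xw hx.
set k := index x f'.
have hk : k < size f' by rewrite index_mem.
rewrite (eq_in_count (a2 := fun y => (x < y) && (index y f' < k))); last first.
  move=> y yf /=; congr (_ && _).
  rewrite -(nth_index 0 yf) -(nth_index 0 xf) !tau_f ?index_mem //.
  by rewrite sorted_nth_lt ?sfs ?ufs ?size_f ?index_mem // nth_index.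
have := cf hk; rewrite nth_index // => <-.
by rewrite count_take_index ?uf.
Qed.

Lemma T7 x : x \in w -> ~~ descent_top w x ->
  pat2_31 w x = count (fun y => (y < x) && (tau x < tau y)) w.
Proof.
move=> xw hx.
rewrite (count_split (descent_top w)).
rewrite (eq_in_count (a1 := fun y => descent_top w y && _) (a2 := pred0)); last first.
  move=> y yw /=; apply/negbTE; apply/negP => /andP [hy /andP [xy ty]].
  have [t1 _] := tau_dt yw hy; have [t2 _] := tau_ndt xw hx; lia.
rewrite count_pred0 add0n -cnt_g.
have xg : x \in g' by rewrite memg xw hx.
set k := index x g'.
have hk : k < size g' by rewrite index_mem.
rewrite (eq_in_count (a2 := fun y => (y < x) && (k < index y g'))); last first.
  move=> y yg /=; congr (_ && _).
  rewrite -(nth_index 0 yg) -(nth_index 0 xg) !tau_g ?index_mem //.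
  by rewrite sorted_nth_lt ?sgs ?ugs ?size_g ?index_mem // nth_index.
have := cg hk; rewrite nth_index // => <-.
by rewrite count_drop_index ?ug.
Qed.

Definition T := map tau (iota 1 (size w)).
Definition t' := behead T.

Lemma size_T : size T = size w.
Proof. by rewrite size_map size_iota. Qed.

Lemma at_T j : 1 <= j <= size w -> at_ T j = tau j.
Proof.
case: j => // j /= hj; rewrite (nth_map 0) ?size_iota // nth_iota //.
Qed.

Lemma at_t' j : 1 <= j < size w -> at_ t' j = tau j.+1.
Proof.
case: j => // j /= hj; rewrite /t' nth_behead (nth_map 0) ?size_iota // nth_iota //.
Qed.

Lemma head_T : head 0 T = size w.
Proof.
have H2 := hm2; rewrite /T; case E : (size w) H2 => [|m] // _.
by rewrite /= -E tau_one.
Qed.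

Lemma size_t' : size t' = (size w).-1.
Proof. by rewrite /t' size_behead size_T. Qed.

Lemma pos_t' x : x != size w -> pos T x = (pos t' x).+1.
Proof.
move=> xm; rewrite /pos /t'.
have : head 0 T = size w := head_T.
have sT : 0 < size T by rewrite size_T; have H2 := hm2; set m := size w in H2 *; lia.
case: T sT => [|a l] //= _ ->.
by rewrite eq_sym (negbTE xm).
Qed.

Lemma tau_le x : x \in w -> (x <= tau x) = ~~ descent_top w x.
Proof.
move=> xw; case: (boolP (descent_top w x)) => h /=.
  by have [h1 _] := tau_dt xw h; rewrite leqNgt h1.
by have [h1 _] := tau_ndt xw h; rewrite h1.
Qed.

Lemma mem_T x : x \in w -> x \in T.
Proof.
move=> xw; case: (boolP (descent_bottom w x)) => h.
  have xf : x \in fs by rewrite memfs xw h.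
  set k := index x fs.
  have hk : k < size f' by rewrite -size_f index_mem.
  have yf : nth 0 f' k \in f' by apply: mem_nth.
  have := tau_f hk; rewrite nth_index // => <-.
  apply: map_f; rewrite -(perm_mem pw).
  by move: yf; rewrite memf => /andP [].
have xg : x \in gs by rewrite memgs xw h.
set k := index x gs.
have hk : k < size g' by rewrite -size_g index_mem.
have yg : nth 0 g' k \in g' by apply: mem_nth.
have := tau_g hk; rewrite nth_index // => <-.
apply: map_f; rewrite -(perm_mem pw).
by move: yg; rewrite memg => /andP [].
Qed.

Lemma pos_T x : x \in w -> (x < pos T x) = descent_bottom w x.
Proof.
move=> xw.
have xT := mem_T xw.
have hy : 1 <= pos T x <= size w by rewrite /pos /= -size_T index_mem.
have ey : tau (pos T x) = x by rewrite -at_T // at_pos.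
have yw : pos T x \in w by rewrite (perm_mem pw) mem_iota; set m := size w in hy *; lia.
case: (boolP (descent_top w (pos T x))) => h.
  have [h1 h2] := tau_dt yw h; rewrite ey in h1 h2; by rewrite h1 h2.
have [h1 h2] := tau_ndt yw h; rewrite ey in h1 h2.
by rewrite ltnNge h1 (negbTE h2).
Qed.

Lemma ndt_lt x : x \in w -> pos w x < size w ->
  (x < at_ w (pos w x).+1) = ~~ descent_top w x.
Proof.
move=> xw hp; rewrite dt_pos // hp andTb -leqNgt ltn_neqAle.
have -> : (x != at_ w (pos w x).+1).
  rewrite eq_sym at_ne //; last by rewrite eqn_leq ltnn.
  by have := mem_w_le pw xw => /andP [].
by [].
Qed.

Lemma nestW x : x \in w -> 2 <= x < size w -> nest t' x.-1 = qq w x.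
Proof.
move=> xw hx.
have hpx : pos w x < size w.
  rewrite ltn_neqAle pos_le // andbT; apply/eqP => e.
  by move: hx; rewrite -(at_pos xw) e hl.
have hlx : at_ w (size w) < x by rewrite hl; case/andP: hx.
have hA := A3 u xw hpx hlx; rewrite ndt_lt // in hA.
set M := (size w).-1.
have eM : size w = M.+1 by have H2 := hm2; rewrite /M; set m := size w in H2 *; lia.
have ex : tau x = at_ t' x.-1 by rewrite at_t'; [rewrite prednK //; lia | lia].
rewrite /nest size_t' -/M.
rewrite (eq_in_count (a2 := fun j => ((j.+1 < x) && (x <= tau x) && (tau x < tau j.+1))
   || ((tau j.+1 < tau x) && (tau x < x) && (x < j.+1)))); last first.
  move=> j; rewrite mem_iota => hj.
  rewrite -ex at_t'; last by rewrite eM; lia.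
  have -> : (j < x.-1) = (j.+1 < x) by lia.
  have -> : (x.-1 < tau x) = (x <= tau x) by lia.
  have -> : (tau x <= x.-1) = (tau x < x) by lia.
  have -> : (x.-1 < j) = (x < j.+1) by lia.
  by [].
have cnt : forall Q : pred nat, count Q w = Q 1 + count (fun j => Q j.+1) (iota 1 M).
  move=> Q; rewrite (permP pw) eM /= (iotaDl 1 1) count_map; congr (_ + _).
case: (boolP (descent_top w x)) => hd.
  rewrite hd addn0 in hA; rewrite -hA (T6 xw hd) cnt.
  have -> : (x < 1) = false by case/andP: hx => a _; lia.
  rewrite /= add0n; apply: eq_count => j /=.
  have [t1 _] := tau_dt xw hd.
  rewrite [x <= tau x]leqNgt t1 andbF /= andbT.
  by rewrite andbC.
rewrite hd addn1 in hA.
have [t1 _] := tau_ndt xw hd.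
have t2 : tau x < tau 1 by rewrite tau_one tau_lt_m //; apply/eqP => e; move: hx; rewrite e.
rewrite (T7 xw hd) cnt /= (proj1 (andP hx)) t2 /= in hA.
move: hA => [<-]; apply: eq_count => j /=.
by rewrite t1 andbT [tau x < x]ltnNge t1 /= andbF orbF.
Qed.
End Tau.


Lemma hat_size s : size (hat s) = (size s).+1.
Proof. by rewrite /hat size_rcons size_map. Qed.

Lemma hat_at s k i : 1 <= i ->
  ((i < at_ s k) = (i.+1 < at_ (hat s) k)) /\ ((at_ s k < i) = (at_ (hat s) k < i.+1)).
Proof.
move=> hi; case: k => [|k] /=; first by rewrite ltn0 hi.
rewrite /hat nth_rcons size_map.
case: (ltnP k (size s)) => hk; first by rewrite (nth_map 0) // ltnS.
rewrite nth_default //.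
by case: (k == size s); rewrite ?ltnS ?ltn0 ?hi /=; lia.
Qed.

Lemma hat_pos s i : i \in s -> pos (hat s) i.+1 = pos s i.
Proof.
move=> hs; rewrite /pos /hat -cats1 index_cat.
have -> : i.+1 \in [seq x.+1 | x <- s] by apply: map_f.
by rewrite index_map //; move=> a b [].
Qed.

Lemma hat_uniq s : uniq s -> 0 \notin s -> uniq (hat s).
Proof.
move=> + s0.
move=> us; rewrite /hat rcons_uniq map_inj_uniq ?us ?andbT; last by move=> a b [].
apply/negP; move=> /mapP [x xs e]; move: e xs => [<-]; exact/negP.
Qed.

Lemma hat_perm n s : perm_eq s (iota 1 n.+1) -> perm_eq (hat s) (iota 1 (size (hat s))).
Proof.
move=> ps; rewrite hat_size (perm_size ps) size_iota /hat.
rewrite perm_rcons (_ : iota 1 n.+2 = 1 :: iota 2 n.+1) // perm_cons.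
have -> : iota 2 n.+1 = map succn (iota 1 n.+1).
  by rewrite (iotaDl 1 1); apply: eq_map => x; rewrite add1n.
by apply: perm_map.
Qed.

Lemma hat_last s : at_ (hat s) (size (hat s)) = 1.
Proof. by rewrite hat_size /= /hat nth_rcons size_map ltnn eqxx. Qed.



Lemma boundF w x : uniq w -> perm_eq w (iota 1 (size w)) ->
  x \in filter (descent_top w) w ->
  pat2_31 w x <= count (fun y => x < y) (filter (descent_top w) w).
Proof.
move=> u pw; rewrite mem_filter => /andP [hx xw].
rewrite count_filter.
have hA := A1 x u; rewrite hx in hA.
have hp := A2 xw.
have e1 := count_db_dt u pw.
have hb : count (fun y => descent_bottom w y && (y < x)) w <= count (descent_bottom w) w.
  by apply: sub_count => y /andP [].
have s1 := count_split (fun y => y < x) (descent_top w) w.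
have s2 := count_split (fun y => x < y) (fun y => descent_top w y && ~~ (y < x)) w.
have h3 : count (fun y => ~~ (x < y) && (descent_top w y && ~~ (y < x))) w <= 1.
  apply: (@leq_trans (count (pred1 x) w)); last by rewrite count_uniq_mem ?xw.
  apply: sub_count => y /= /andP [a /andP [_ b]].
  by apply/eqP; apply/eqP; rewrite eqn_leq -!leqNgt in a b *; rewrite a b.
have e3 : count (fun y => ~~ (y < x) && descent_top w y) w = count (fun y => descent_top w y && ~~ (y < x)) w.
  by apply: eq_count => y; rewrite andbC.
have e4 : count (fun y => (y < x) && descent_top w y) w = count (fun y => descent_top w y && (y < x)) w.
  by apply: eq_count => y; rewrite andbC.
have e5 : count (fun y => (x < y) && (descent_top w y && ~~ (y < x))) w = count (predI (fun y => x < y) (descent_top w)) w.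
  apply: eq_count => y /=; case: (ltngtP x y) => //=; by rewrite andbT.
move: hA hp e1 hb s1 s2 h3 e3 e4 e5.
set a1 := count _ w; set a2 := count _ w; set a3 := count _ w; set a4 := count _ w.
set a5 := count _ w; set a6 := count _ w; set a7 := count _ w; set a8 := count _ w.
set a9 := count _ w; set c := cc w x; set p := pat2_31 w x. lia.
Qed.

Lemma boundG w x : uniq w ->
  x \in filter (fun y => ~~ descent_top w y) w ->
  pat2_31 w x <= count (fun y => y < x) (filter (fun y => ~~ descent_top w y) w).
Proof.
move=> u; rewrite mem_filter => /andP [hx xw].
rewrite count_filter.
have hA := A1 x u; rewrite (negbTE hx) addn0 in hA.
have hp := A2 xw.
have s1 := count_split (descent_bottom w) (fun y => y < x) w.
have s2 := count_split (descent_top w) (fun y => y < x) w.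
have e5 : count (predI (fun y => y < x) (fun y => ~~ descent_top w y)) w = count (fun y => ~~ descent_top w y && (y < x)) w.
  by apply: eq_count => y /=; rewrite andbC.
move: hA hp s1 s2 e5.
set a1 := count _ w; set a2 := count _ w; set a3 := count _ w; set a4 := count _ w.
set a5 := count _ w; set a6 := count _ w; set c := cc w x; set p := pat2_31 w x. lia.
Qed.

Theorem theorem2p7 (n : nat) (s : seq nat) :
  is_perm n.+1 s ->
  (exists t, Phi_spec (hat s) t) /\
  (forall t, Phi_spec (hat s) t ->
     head 0 t = n.+2 /\ psi_FV s = psi_YZL (Psi_of t)).
Proof.
rewrite /is_perm => ps.
have ss : size s = n.+1 by rewrite (perm_size ps) size_iota.
have us : uniq s by rewrite (perm_uniq ps) iota_uniq.
have s0 : 0 \notin s by rewrite (perm_mem ps) mem_iota.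
have u : uniq (hat s) := hat_uniq us s0.
have pw : perm_eq (hat s) (iota 1 (size (hat s))) := hat_perm ps.
have hl : at_ (hat s) (size (hat s)) = 1 := hat_last s.
have sw : size (hat s) = n.+2 by rewrite hat_size ss.
have hm2 : 2 <= size (hat s) by rewrite sw.
split.
  have [f' [pf cf]] := arrF (filter_uniq (descent_top (hat s)) u) (fun x => @boundF (hat s) x u pw).
  have [g' [pg cg]] := arrG (filter_uniq (fun y => ~~ descent_top (hat s) y) u) (fun x => @boundG (hat s) x u).
  eexists; rewrite /Phi_spec; exists f', g'; split; [exact: pf | exact: pg | exact: cf | exact: cg | reflexivity].
move=> t [f' [g' [pf pg cf cg ->]]].
change (head 0 (T (hat s) f' g') = n.+2 /\ psi_FV s = psi_YZL (Psi_of (T (hat s) f' g'))).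
split; first by rewrite (head_T u pw pf pg cg hl hm2) sw.
rewrite /psi_FV /psi_YZL /Psi_of -/(t' (hat s) f' g') size_t' sw ss /=.
have key : forall i, 1 <= i <= n ->
   fv_step s i = yzl_step (t' (hat s) f' g') i /\ pat2_13 s i = nest (t' (hat s) f' g') i.
  move=> i hi.
  set w := hat s.
  have hi1 : 1 <= i by case/andP: hi.
  have xw : i.+1 \in w by rewrite (perm_mem pw) mem_iota sw; lia.
  have iS : i \in s by rewrite (perm_mem ps) mem_iota; lia.
  have hp : pos w i.+1 = pos s i by apply: hat_pos.
  have hpl : pos s i <= n.+1 by rewrite -ss; apply: pos_le.
  have hpw : pos w i.+1 < size w by rewrite hp sw.
  split.
    rewrite /fv_step.
    have [a1 a2] := hat_at s (pos s i).-1 hi1.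
    have [b1 b2] := hat_at s (pos s i).+1 hi1.
    rewrite a1 a2 b1 b2 -hp -/w.
    rewrite -(db_pos u xw) (ndt_lt u pw xw hpw).
    have e1 : (at_ w (pos w i.+1).-1 < i.+1) = ~~ descent_bottom w i.+1.
      rewrite (db_pos u xw).
      have : at_ w (pos w i.+1).-1 != i.+1.
        apply: at_ne => //; rewrite /pos /=; case: (index _ _) => //= k.
        by rewrite neq_ltn ltnSn.
      by case: ltngtP.
    have e2 : (at_ w (pos w i.+1).+1 < i.+1) = descent_top w i.+1.
      by rewrite (dt_pos u xw) hpw.
    rewrite e1 e2 /yzl_step at_t'; last by rewrite sw; lia.
    rewrite (tau_le u pw pf pg cf cg xw).
    have xm : i.+1 != size w by rewrite sw; apply/eqP; lia.
    have e3 := pos_T u pw pf pg cf cg hl hm2 xw.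
    rewrite (pos_t' u pw pf pg cg hl hm2 xm) ltnS in e3.
    rewrite e3.
    by case: (descent_bottom w i.+1); case: (descent_top w i.+1).
  have hx2 : 2 <= i.+1 < size w by rewrite sw; lia.
  rewrite -[i in nest _ i]/(i.+1.-1) (nestW u pw pf pg cf cg hl hm2 xw hx2).
  rewrite /pat2_13 /qq hp ss /=.
  rewrite (eq_count (a2 := fun j => (at_ w j < i.+1) && (i.+1 < at_ w j.+1))); last first.
    move=> j /=; have [_ c1] := hat_at s j hi1; have [c2 _] := hat_at s j.+1 hi1.
    by rewrite c1 c2.
  rewrite sw.
  case: (ltnP (pos s i) n.+1) => hq.
    have -> : n.+2 - (pos s i).+1 = (n - pos s i) + 1 by lia.
    rewrite iotaD count_cat /=.
    have -> : (pos s i).+1 + (n - pos s i) = n.+1 by lia.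
    have : at_ w n.+2 = 1 by rewrite -sw hl.
    rewrite /= => ->; have -> : (i.+1 < 1) = false by [].
    by rewrite andbF /= !addn0.
  have -> : n - pos s i = 0 by lia.
  by have -> : n.+2 - (pos s i).+1 = 0 by lia.
congr pair; apply/eq_in_map => i; rewrite mem_iota => hi.
  by have [] := key i (ltac:(lia)).
by have [] := key i (ltac:(lia)).
Qed.
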